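(* Let $\mathfrak{M}=\{M^{(\alpha)}:\alpha>0\}$ be a non-quasianalytic weight matrix of R-moderate growth. Then $\mathfrak{K}=\mathfrak{K}(\mathfrak{M})$ has R-moderate growth, and this property of $\mathfrak{K}$ is equivalent to \[ \forall\alpha>0\ \exists\beta>0\ \exists H\ge1\ \forall t\ge0:\ 2\kappa_\beta(t)\le\kappa_\alpha(Ht)+H; \] in particular the latter condition holds.
   Context: A weight sequence is $M=(M_k)_{k\ge0}$ with $M_k=\mu_0\cdots\mu_k$, $1=\mu_0\le\mu_1\le\cdots$, $\mu_k\to\infty$; non-quasianalytic if $\sum_k1/\mu_k<\infty$. A weight matrix is a family $\{M^{(\alpha)}:\alpha>0\}$ of weight sequences with $M^{(\alpha)}\le M^{(\beta)}$ for $\alpha\le\beta$; non-quasianalytic if all members are; it has R-moderate growth if for every $M$ in it there are $N$ in it and $C\ge1$ with $M_{j+k}\le C^{j+k}N_jN_k$ for all $j,k\in\mathbb{N}$. Associated function $\omega_M(t)=\sup_k\log(t^kM_0/M_k)$, $\omega_M(0)=0$; $\widetilde\omega_M(t)=\omega_M(t)+\log(1+t^2)$. For non-quasianalytic pre-weight $\omega$: $\kappa_\omega(t)=\int_1^\infty\omega(ts)s^{-2}ds$, $\varphi^*_\omega(x)=\sup_{y\ge0}(xy-\omega(e^y))$. Here $\kappa_\alpha:=\kappa_{\widetilde\omega_{M^{(\alpha)}}}$ and $K^{(\alpha)}_j=\exp(\varphi^*_{\kappa_\alpha}(j))$ (with $\kappa_\alpha$ replaced by an equivalent normalized function, i.e.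 vanishing on $[0,1]$), $\mathfrak{K}(\mathfrak{M})=\{K^{(\alpha)}\}$. *)

(* Defs.v *)
From Stdlib Require Import Reals.
From Coquelicot Require Import Coquelicot.
Open Scope R_scope.

Definition weight_seq_with (M mu : nat -> R) : Prop :=
  mu 0%nat = 1 /\
  (forall k, mu k <= mu (S k)) /\
  is_lim_seq mu p_infty /\
  (forall k, M k = prod_f_R0 mu k).

Definition weight_seq (M : nat -> R) : Prop := exists mu, weight_seq_with M mu.

Definition nonquasianalytic_seq (M : nat -> R) : Prop :=
  exists mu, weight_seq_with M mu /\ ex_series (fun k => / mu k).

Definition seq_le (M N : nat -> R) : Prop := forall k, M k <= N k.

(* A weight matrix {M^(alpha) : alpha > 0}, represented as M : R -> nat -> R
   (only the values at alpha > 0 are relevant). *)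
Definition weight_matrix (M : R -> nat -> R) : Prop :=
  (forall a, 0 < a -> weight_seq (M a)) /\
  (forall a b, 0 < a -> a <= b -> seq_le (M a) (M b)).

Definition nonquasianalytic_matrix (M : R -> nat -> R) : Prop :=
  weight_matrix M /\ forall a, 0 < a -> nonquasianalytic_seq (M a).

Definition R_moderate_growth (M : R -> nat -> R) : Prop :=
  forall a, 0 < a -> exists b, 0 < b /\ exists C, 1 <= C /\
    forall j k : nat, M a (j + k)%nat <= C ^ (j + k) * M b j * M b k.

Definition omega_assoc (M : nat -> R) (t : R) : R :=
  if Rle_dec t 0 then 0
  else real (Sup_seq (fun k => Finite (ln (t ^ k * M 0%nat / M k)))).

Definition omega_tilde (M : nat -> R) (t : R) : R :=
  omega_assoc M t + ln (1 + t ^ 2).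

Definition kappa_of (om : R -> R) (t : R) : R :=
  RInt_gen (fun s => om (t * s) / s ^ 2) (at_point 1) (Rbar_locally p_infty).

Definition phi_star (om : R -> R) (x : R) : R :=
  real (Lub_Rbar (fun z => exists y, 0 <= y /\ z = x * y - om (exp y))).

Definition kappa_mat (M : R -> nat -> R) (a t : R) : R :=
  kappa_of (omega_tilde (M a)) t.

(* normalized equivalent function: vanishes on [0,1], differs from kappa_alpha
   by at most kappa_alpha(1) (kappa_alpha is nondecreasing). *)
Definition kappa0_mat (M : R -> nat -> R) (a t : R) : R :=
  Rmax 0 (kappa_mat M a t - kappa_mat M a 1).

Definition K_mat (M : R -> nat -> R) (a : R) (j : nat) : R :=
  exp (phi_star (kappa0_mat M a) (INR j)).

(* Main.v *)
Require Import Defs.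
From Stdlib Require Import Reals Lra Lia Psatz Arith.
From Stdlib Require Classical_Prop.
From Coquelicot Require Import Coquelicot.
Open Scope R_scope.


Section W.
Variables (M mu : nat -> R).
Hypothesis HW : weight_seq_with M mu.

Lemma mu_mono : forall i j, (i <= j)%nat -> mu i <= mu j.
Proof.
  destruct HW as [_ [Hm _]].
  intros i j H; induction H; [lra| specialize (Hm m); lra].
Qed.

Lemma mu_ge1 : forall k, 1 <= mu k.
Proof.
  intros k. destruct HW as [H0 _]. rewrite <- H0. apply mu_mono. lia.
Qed.

Lemma M0_1 : M 0%nat = 1.
Proof. destruct HW as [H0 [_ [_ HM]]]. rewrite HM. simpl. exact H0. Qed.

Lemma M_S : forall k, M (S k) = M k * mu (S k).
Proof. destruct HW as [_ [_ [_ HM]]]. intros k. rewrite !HM. reflexivity. Qed.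

Lemma M_ge1 : forall k, 1 <= M k.
Proof.
  induction k. rewrite M0_1; lra. rewrite M_S. pose proof (mu_ge1 (S k)). nra.
Qed.

Lemma M_pos : forall k, 0 < M k.
Proof. intros k; pose proof (M_ge1 k); lra. Qed.

Fixpoint Pf (u : R) (k : nat) : R :=
  match k with 0%nat => 0 | S k' => Pf u k' + ln (u / mu (S k')) end.
Fixpoint Sf (u : R) (k : nat) : R :=
  match k with 0%nat => 0 | S k' => Sf u k' + Rmax 0 (ln (u / mu (S k'))) end.

Lemma Pf_eq : forall u k, 0 < u -> ln (u ^ k * M 0%nat / M k) = Pf u k.
Proof.
  intros u k Hu. induction k.
  - simpl. rewrite M0_1. replace (1*1/1) with 1 by field. apply ln_1.
  - simpl. rewrite <- IHk. rewrite M_S.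
    pose proof (M_pos k). pose proof (mu_ge1 (S k)). rewrite M0_1 in *.
    rewrite <- ln_mult.
    + f_equal. field. lra.
    + apply Rdiv_lt_0_compat. apply Rmult_lt_0_compat. apply pow_lt; lra. lra. lra.
    + apply Rdiv_lt_0_compat; lra.
Qed.

Lemma Sf_mono : forall u k d, Sf u k <= Sf u (k + d).
Proof.
  intros u k d. induction d. rewrite Nat.add_0_r. lra.
  rewrite Nat.add_succ_r. simpl. pose proof (Rmax_l 0 (ln (u / mu (S (k + d))))). lra.
Qed.

Lemma Pf_le_Sf : forall u k, Pf u k <= Sf u k.
Proof.
  intros u k. induction k. simpl; lra. simpl.
  pose proof (Rmax_r 0 (ln (u / mu (S k)))). lra.
Qed.

Lemma ln_div_le0 : forall u m, 0 < u -> u <= m -> ln (u / m) <= 0.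
Proof.
  intros u m Hu Hm. rewrite <- ln_1. apply ln_le.
  apply Rdiv_lt_0_compat; lra. apply Rmult_le_reg_r with m. lra.
  unfold Rdiv. rewrite Rmult_assoc, Rinv_l; lra.
Qed.

Lemma Pf_tail : forall u K d, 0 < u -> (forall i, (K < i)%nat -> u <= mu i) ->
  Pf u (K + d) <= Pf u K.
Proof.
  intros u K d Hu HK. induction d. rewrite Nat.add_0_r; lra.
  rewrite Nat.add_succ_r. simpl.
  pose proof (ln_div_le0 u (mu (S (K + d))) Hu (HK (S (K + d)) ltac:(lia))). lra.
Qed.

Lemma Pf_le_SfK : forall u K k, 0 < u -> (forall i, (K < i)%nat -> u <= mu i) ->
  Pf u k <= Sf u K.
Proof.
  intros u K k Hu HK. destruct (le_lt_dec k K) as [H|H].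
  - replace K with (k + (K - k))%nat by lia. eapply Rle_trans.
    apply Pf_le_Sf. apply Sf_mono.
  - replace k with (K + (k - K))%nat by lia. eapply Rle_trans.
    apply Pf_tail; auto. apply Pf_le_Sf.
Qed.

Lemma Sf_eq_Pf : forall u K, 0 < u -> (forall i, (i <= K)%nat -> mu i <= u) ->
  Sf u K = Pf u K.
Proof.
  intros u K Hu. induction K; intros H. reflexivity.
  simpl. rewrite IHK by (intros; apply H; lia).
  rewrite Rmax_right. reflexivity.
  rewrite <- ln_1. apply ln_le. lra. pose proof (mu_ge1 (S K)).
  apply Rmult_le_reg_r with (mu (S K)). lra.
  unfold Rdiv. rewrite Rmult_assoc, Rinv_l. specialize (H (S K) (le_n _)). lra. lra.
Qed.

Lemma Sf_le_someP : forall u K, 0 < u -> exists k, Sf u K <= Pf u k.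
Proof.
  intros u K Hu. induction K. exists 0%nat; simpl; lra.
  destruct IHK as [k Hk]. simpl.
  destruct (Rle_dec (ln (u / mu (S K))) 0) as [H|H].
  - exists k. rewrite Rmax_left by lra. lra.
  - exists (S K). assert (Hl : mu (S K) < u).
    { apply Rnot_le_lt. intros Hc. apply H. apply ln_div_le0; lra. }
    rewrite <- Sf_eq_Pf. simpl. lra. auto.
    intros i Hi. pose proof (mu_mono i (S K) Hi). lra.
Qed.

Lemma exists_K : forall v, exists K, forall i, (K < i)%nat -> v <= mu i.
Proof.
  intros v. destruct HW as [_ [_ [Hl _]]].
  apply is_lim_seq_spec in Hl. destruct (Hl v) as [N HN].
  exists N. intros i Hi. apply Rlt_le, HN. lia.
Qed.

Lemma omega_eq_Sf : forall u K, 0 < u -> (forall i, (K < i)%nat -> u <= mu i) ->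
  omega_assoc M u = Sf u K.
Proof.
  intros u K Hu HK. unfold omega_assoc. destruct (Rle_dec u 0) as [Hc|Hc]. lra.
  rewrite (is_sup_seq_unique _ (Finite (Sf u K))). reflexivity.
  intros eps. split.
  - intros n. simpl. rewrite Pf_eq by auto. pose proof (Pf_le_SfK u K n Hu HK).
    pose proof (cond_pos eps). lra.
  - destruct (Sf_le_someP u K Hu) as [k Hk]. exists k. simpl.
    rewrite Pf_eq by auto. pose proof (cond_pos eps). lra.
Qed.

Lemma omega_ge : forall u k, 0 < u -> ln (u ^ k * M 0%nat / M k) <= omega_assoc M u.
Proof.
  intros u k Hu. destruct (exists_K u) as [K HK]. rewrite (omega_eq_Sf u K Hu HK).
  rewrite Pf_eq by auto. apply Pf_le_SfK; auto.
Qed.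

Lemma omega_le : forall u c, 0 < u -> (forall k, ln (u ^ k * M 0%nat / M k) <= c) ->
  omega_assoc M u <= c.
Proof.
  intros u c Hu H. destruct (exists_K u) as [K HK]. rewrite (omega_eq_Sf u K Hu HK).
  destruct (Sf_le_someP u K Hu) as [k Hk]. specialize (H k). rewrite Pf_eq in H by auto.
  lra.
Qed.

Lemma omega_nonneg : forall u, 0 <= omega_assoc M u.
Proof.
  intros u. destruct (Rle_dec u 0) as [H|H].
  - unfold omega_assoc. destruct (Rle_dec u 0) as [Hc|Hc]. lra. contradiction.
  - pose proof (omega_ge u 0 ltac:(lra)). simpl in H0.
    replace (1 * M 0%nat / M 0%nat) with 1 in H0 by (rewrite M0_1; field).
    rewrite ln_1 in H0. exact H0.
Qed.

Lemma omega_mono : forall u v, 0 < u -> u <= v -> omega_assoc M u <= omega_assoc M v.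
Proof.
  intros u v Hu Huv. apply omega_le; auto. intros k.
  eapply Rle_trans; [|apply (omega_ge v k); lra].
  pose proof (M_pos k). rewrite M0_1.
  apply ln_le. apply Rdiv_lt_0_compat; [|lra]. apply Rmult_lt_0_compat; [apply pow_lt|]; lra.
  unfold Rdiv. apply Rmult_le_compat_r. left; apply Rinv_0_lt_compat; lra.
  apply Rmult_le_compat_r. lra. apply pow_incr. lra.
Qed.

Lemma omega0 : omega_assoc M 0 = 0.
Proof. unfold omega_assoc. destruct (Rle_dec 0 0). reflexivity. lra. Qed.

End W.


Lemma div_le_helper : forall a b c d, 0 < b -> 0 < d -> a * d <= c * b -> a / b <= c / d.
Proof.
  intros a b c d Hb Hd H.
  replace (a / b) with ((a * d) * / (b * d)) by (field; lra).
  replace (c / d) with ((c * b) * / (b * d)) by (field; lra).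
  apply Rmult_le_compat_r. left; apply Rinv_0_lt_compat; nra. exact H.
Qed.

Lemma mg_omega : forall Ma ma N nu C, weight_seq_with Ma ma -> weight_seq_with N nu ->
  1 <= C -> (forall j k, Ma (j + k)%nat <= C ^ (j + k) * N j * N k) ->
  forall u, 0 < u -> 2 * omega_assoc N u <= omega_assoc Ma (C * u).
Proof.
  intros Ma ma N nu C HWa HWn HC Hmg u Hu.
  cut (omega_assoc N u <= omega_assoc Ma (C * u) / 2). lra.
  apply (omega_le N nu HWn); auto. intros j.
  pose proof (omega_ge Ma ma HWa (C * u) (j + j) ltac:(nra)) as Hg.
  rewrite (M0_1 _ _ HWa) in Hg. rewrite (M0_1 _ _ HWn).
  pose proof (M_pos _ _ HWn j) as HN. pose proof (M_pos _ _ HWa (j+j)) as HM.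
  assert (Hx : 0 < u ^ j * 1 / N j) by (apply Rdiv_lt_0_compat; [apply Rmult_lt_0_compat; [apply pow_lt|]|]; lra).
  cut (2 * ln (u ^ j * 1 / N j) <= omega_assoc Ma (C * u)). lra.
  eapply Rle_trans; [|exact Hg].
  replace (2 * ln (u ^ j * 1 / N j)) with (ln ((u ^ j * 1 / N j) * (u ^ j * 1 / N j))) by (rewrite ln_mult; lra).
  apply ln_le. nra.
  replace ((u ^ j * 1 / N j) * (u ^ j * 1 / N j)) with ((u^j * u^j) / (N j * N j)) by (field; lra).
  rewrite Rpow_mult_distr, !pow_add.
  apply div_le_helper. nra. lra.
  specialize (Hmg j j). rewrite pow_add in Hmg.
  assert (0 < u^j) by (apply pow_lt; lra).
  assert (0 <= u^j * u^j) by nra.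
  replace (C ^ j * C ^ j * (u ^ j * u ^ j) * 1 * (N j * N j)) with ((u^j*u^j) * (C ^ j * C ^ j * N j * N j)) by ring.
  apply Rmult_le_compat_l; lra.
Qed.

Lemma omega_tilde_nonneg : forall M mu, weight_seq_with M mu -> forall u, 0 <= omega_tilde M u.
Proof.
  intros M mu HW u. unfold omega_tilde. pose proof (omega_nonneg M mu HW u).
  assert (0 <= ln (1 + u^2)). { rewrite <- ln_1. apply ln_le. lra. pose proof (pow2_ge_0 u). lra. }
  lra.
Qed.

Lemma tilde_ineq : forall Ma ma Nb nb H, weight_seq_with Ma ma -> weight_seq_with Nb nb ->
  1 <= H -> 4 * Ma 4%nat <= H ->
  (forall u, 0 < u -> 4 * omega_assoc Nb u <= omega_assoc Ma (H * u)) ->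
  forall u, 0 <= u -> 2 * omega_tilde Nb u <= omega_tilde Ma (H * u).
Proof.
  intros Ma ma Nb nb H HWa HWb H1 H4 Hw u Hu.
  pose proof (M_ge1 _ _ HWa 4) as HM4.
  destruct (Req_dec u 0) as [H0|H0].
  - subst u. unfold omega_tilde at 1. rewrite (omega0 Nb). simpl.
    replace (1 + 0 * (0 * 1)) with 1 by ring. rewrite ln_1.
    pose proof (omega_tilde_nonneg Ma ma HWa (H * 0)). lra.
  - assert (Hu' : 0 < u) by lra. specialize (Hw u Hu').
    set (W := omega_assoc Ma (H * u)) in *.
    pose proof (omega_nonneg Ma ma HWa (H * u)) as HW0. fold W in HW0.
    unfold omega_tilde. fold W.
    assert (Hl : 0 <= ln (1 + u^2)). { rewrite <- ln_1. apply ln_le. lra. pose proof (pow2_ge_0 u). lra. }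
    destruct (Rle_dec u 1) as [Hu1|Hu1].
    + assert (2 * ln (1 + u^2) <= ln (1 + (H*u)^2)).
      { replace (2 * ln (1 + u^2)) with (ln ((1 + u^2) * (1 + u^2))) by (rewrite ln_mult; nra).
        apply ln_le. nra.
        assert (u^2 <= 1) by nra. assert (16 <= H^2) by nra.
        replace ((H*u)^2) with (H^2 * u^2) by ring. nra. }
      lra.
    + assert (ln (1 + u^2) <= ln (1 + (H*u)^2)).
      { pose proof (pow2_ge_0 u). apply ln_le. lra. replace ((H*u)^2) with (H^2 * u^2) by ring.
        assert (1 <= H^2) by nra. nra. }
      assert (2 * ln (1 + u^2) <= W).
      { pose proof (omega_ge Ma ma HWa (H * u) 4 ltac:(nra)) as Hg. fold W in Hg.
        eapply Rle_trans; [|exact Hg].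
        replace (2 * ln (1 + u^2)) with (ln ((1 + u^2) * (1 + u^2))) by (rewrite ln_mult; nra).
        apply ln_le. nra. rewrite (M0_1 _ _ HWa).
        replace ((H * u) ^ 4 * 1 / Ma 4%nat) with ((H * u) ^ 4 / Ma 4%nat) by (field; lra).
        rewrite <- (Rdiv_1_r ((1 + u ^ 2) * (1 + u ^ 2))).
        apply div_le_helper. lra. lra.
        assert (Hq : (1 + u^2) * (1 + u^2) <= 4 * u^4). { assert (1 <= u^2) by nra. assert (1+u^2 <= 2*u^2) by lra. replace (u^4) with (u^2*u^2) by ring. nra. }
        assert (H^4 >= H) by (assert (1 <= H^3) by (apply pow_R1_Rle; lra); replace (H^4) with (H * H^3) by ring; nra).
        replace ((H*u)^4) with (H^4 * u^4) by ring.
        assert (0 <= u^4) by (apply pow_le; lra).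
        nra. }
      lra.
Qed.


Lemma gen_of_lim : forall (g F : R -> R) (l : R),
  (forall b, 1 < b -> is_RInt g 1 b (F b)) ->
  filterlim F (Rbar_locally p_infty) (locally l) ->
  is_RInt_gen g (at_point 1) (Rbar_locally p_infty) l.
Proof.
  intros g F l Hi Hl P HP.
  specialize (Hl P HP). destruct Hl as [B HB].
  apply Filter_prod with (Q := fun a => a = 1) (R := fun b => Rmax B 1 < b).
  - reflexivity.
  - exists (Rmax B 1). auto.
  - intros x y Hx Hy. subst x. simpl. exists (F y). split.
    + apply Hi. pose proof (Rmax_r B 1). lra.
    + apply HB. pose proof (Rmax_l B 1). lra.
Qed.

Lemma mono_bounded : forall (g : R -> R) (B : R),
  (forall s, 1 <= s -> 0 <= g s) ->
  (forall b, 1 <= b -> ex_RInt g 1 b) ->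
  (forall b, 1 <= b -> RInt g 1 b <= B) ->
  exists l, 0 <= l /\ is_RInt_gen g (at_point 1) (Rbar_locally p_infty) l.
Proof.
  intros g B Hpos Hex Hb.
  set (E := fun z => exists b, 1 <= b /\ z = RInt g 1 b).
  assert (Hbd : bound E). { exists B. intros z [b [H1 H2]]. subst z. auto. }
  assert (Hne : exists z, E z). { exists (RInt g 1 1). exists 1. split; [lra|reflexivity]. }
  destruct (completeness E Hbd Hne) as [l [Hub Hlub]].
  assert (Hmono : forall b1 b2, 1 <= b1 -> b1 <= b2 -> RInt g 1 b1 <= RInt g 1 b2).
  { intros b1 b2 H1 H2. rewrite <- (RInt_Chasles g 1 b1 b2).
    - assert (0 <= RInt g b1 b2).
      { apply RInt_ge_0. auto. apply (ex_RInt_Chasles_2 g 1). lra. apply Hex; lra.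
        intros x Hx. apply Hpos. lra. }
      simpl. unfold plus; simpl. lra.
    - apply Hex; lra.
    - apply (ex_RInt_Chasles_2 g 1). lra. apply Hex; lra. }
  exists l. split.
  - apply Rle_trans with (RInt g 1 1). rewrite RInt_point. apply Rle_refl.
    apply Hub. exists 1. split; [lra|reflexivity].
  - apply gen_of_lim with (F := fun b => RInt g 1 b).
    + intros b Hb1. exact (RInt_correct (V := R_CompleteNormedModule) g 1 b (Hex b ltac:(lra))).
    + intros P [eps HP].
      assert (Hz : exists b0, 1 <= b0 /\ l - eps < RInt g 1 b0).
      { apply Classical_Prop.NNPP. intros Hc.
        assert (Hu : is_upper_bound E (l - eps)).
        { intros z [b [H1 H2]]. subst z. apply Rnot_lt_le. intros Hlt. apply Hc. exists b. auto. }
        specialize (Hlub _ Hu). pose proof (cond_pos eps). lra. }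
      destruct Hz as [b0 [Hb0 Hlt]].
      exists b0. intros x Hx. apply HP.
      assert (Hx1 : RInt g 1 x <= l). { apply Hub. exists x. split; [lra|reflexivity]. }
      pose proof (Hmono b0 x Hb0 ltac:(lra)).
      change (Rabs (RInt g 1 x - l) < eps). rewrite Rabs_left1 by lra. lra.
Qed.

Lemma cont_of_der : forall (f : R -> R) x, ex_derive f x -> continuous f x.
Proof. intros f x H. exact (ex_derive_continuous (K := R_AbsRing) (V := R_NormedModule) f x H). Qed.

Lemma is_RInt_inv_sq : forall c a b, 0 < a -> 0 < b ->
  is_RInt (fun s => c / s ^ 2) a b (c / a - c / b).
Proof.
  intros c a b Ha Hb.
  replace (c / a - c / b) with (minus ((fun s => - c / s) b) ((fun s => - c / s) a))
    by (unfold minus, plus, opp; simpl; field; lra).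
  apply (is_RInt_derive (V := R_CompleteNormedModule) (fun s => - c / s) (fun s => c / s ^ 2)).
  - intros x Hx. assert (0 < x). { unfold Rmin in *; destruct (Rle_dec a b); lra. }
    auto_derive. lra. field. lra.
  - intros x Hx. assert (0 < x). { unfold Rmin in *; destruct (Rle_dec a b); lra. }
    apply cont_of_der. auto_derive. intro Hc; nra.
Qed.

Lemma is_RInt_gen_inv_sq : forall c,
  is_RInt_gen (fun s => c / s ^ 2) (at_point 1) (Rbar_locally p_infty) c.
Proof.
  intros c. apply gen_of_lim with (F := fun b => c / 1 - c / b).
  - intros b Hb. apply is_RInt_inv_sq; lra.
  - intros P [eps HP]. exists (Rabs c / eps + 1). intros x Hx. apply HP.
    change (Rabs (c / 1 - c / x - c) < eps).
    pose proof (cond_pos eps). pose proof (Rabs_pos c).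
    assert (0 < x). { assert (0 <= Rabs c / eps) by (apply Rdiv_le_0_compat; lra). lra. }
    replace (c / 1 - c / x - c) with (- (c / x)) by (field; lra).
    rewrite Rabs_Ropp. unfold Rdiv. rewrite Rabs_mult, Rabs_inv, (Rabs_right x) by lra.
    apply Rmult_lt_reg_r with x. lra. rewrite Rmult_assoc, Rinv_l by lra.
    apply Rmult_lt_reg_r with (/ eps). apply Rinv_0_lt_compat; lra.
    replace (eps * x * / eps) with x by (field; lra). lra.
Qed.


Lemma ln1k2_le : forall k, 0 <= k -> ln (1 + k^2) <= 2 * k.
Proof.
  intros k Hk. rewrite <- (ln_exp (2 * k)). apply ln_le. nra.
  replace (2 * k) with (k + k) by ring. rewrite exp_plus.
  pose proof (exp_ineq1_le k). nra.
Qed.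

Lemma ln1_nonneg : forall x, 0 <= ln (1 + x^2).
Proof. intros x. rewrite <- ln_1. apply ln_le. lra. pose proof (pow2_ge_0 x). lra. Qed.

Lemma L1 : forall k b, 0 <= k -> 1 <= b ->
  ex_RInt (fun s => ln (1 + (k * s)^2) / s^2) 1 b /\
  RInt (fun s => ln (1 + (k * s)^2) / s^2) 1 b <= 10 * k.
Proof.
  intros k b Hk Hb.
  set (F := fun s => - ln (1 + (k*s)^2) / s + 2 * k * atan (k * s)).
  assert (HI : is_RInt (fun s => ln (1 + (k * s)^2) / s^2) 1 b (minus (F b) (F 1))).
  { apply (is_RInt_derive (V := R_CompleteNormedModule) F).
    - intros x Hx. assert (0 < x). { unfold Rmin in *; destruct (Rle_dec 1 b); lra. }
      unfold F. auto_derive.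
      + repeat split; try lra. nra.
      + replace (k * x * (k * x * 1)) with ((k*x)^2) by ring. field. split. lra. pose proof (pow2_ge_0 (k*x)). lra.
    - intros x Hx. assert (0 < x). { unfold Rmin in *; destruct (Rle_dec 1 b); lra. }
      apply cont_of_der. auto_derive. repeat split; try lra; try nra. }
  split. eexists; exact HI.
  rewrite (is_RInt_unique _ _ _ _ HI). unfold minus, plus, opp, F; simpl.
  pose proof (ln1_nonneg (k * b)). pose proof (ln1k2_le k Hk).
  pose proof (atan_bound (k * b)). pose proof (atan_bound (k * 1)).
  pose proof PI_4.
  assert (0 <= ln (1 + (k*b)^2) / b) by (apply Rdiv_le_0_compat; lra).
  replace (k * 1) with k in * by ring.
  assert (atan (k*b) - atan k <= PI) by lra.
  assert (2 * k * (atan (k*b) - atan k) <= 2 * k * PI) by (apply Rmult_le_compat_l; lra).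
  assert (2 * k * PI <= 8 * k) by nra.
  replace (k * 1) with k in * by ring.
  replace (k * b * (k * b * 1)) with ((k*b)^2) by ring. replace (k * k) with (k^2) by ring. replace (ln (1 + k^2) / 1) with (ln (1 + k^2)) by field. lra.
Qed.


Lemma c_plus : forall (f g : R -> R) x, continuous f x -> continuous g x ->
  continuous (fun y => f y + g y) x.
Proof. intros f g x Hf Hg. exact (continuous_plus (V := R_NormedModule) f g x Hf Hg). Qed.

Lemma c_mult : forall (f g : R -> R) x, continuous f x -> continuous g x ->
  continuous (fun y => f y * g y) x.
Proof. intros f g x Hf Hg. exact (continuous_mult (K := R_AbsRing) f g x Hf Hg). Qed.

Lemma c_rmax0 : forall y, continuous (fun z => Rmax 0 z) y.
Proof.
  intros y. apply continuous_ext with (f := fun z => (z + Rabs z) * / 2).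
  - intros z. unfold Rmax, Rabs. destruct (Rle_dec 0 z); destruct (Rcase_abs z); lra.
  - apply c_mult. apply c_plus. apply continuous_id. apply continuous_Rabs. apply continuous_const.
Qed.

Lemma c_rmax_ln : forall t m x, 0 < t -> 0 < m -> 0 < x ->
  continuous (fun s => Rmax 0 (ln (t * s / m))) x.
Proof.
  intros t m x Ht Hm Hx.
  apply (continuous_comp (fun s => ln (t * s / m)) (fun z => Rmax 0 z)).
  - apply cont_of_der. auto_derive. apply Rmult_lt_0_compat; [nra| apply Rinv_0_lt_compat; lra].
  - apply c_rmax0.
Qed.

Lemma c_Sf : forall mu t K x, (forall i, 1 <= mu i) -> 0 < t -> 0 < x ->
  continuous (fun s => Sf mu (t * s) K) x.
Proof.
  intros mu t K x Hmu Ht Hx. induction K.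
  - simpl. apply continuous_const.
  - simpl. apply c_plus. exact IHK.
    apply continuous_ext with (f := fun s => Rmax 0 (ln (t * s / mu (S K)))).
    intros; reflexivity.
    apply c_rmax_ln; auto. specialize (Hmu (S K)); lra.
Qed.

Lemma rmax_ln_le : forall x, 0 < x -> Rmax 0 (ln x) <= / 2 * ln (1 + x^2).
Proof.
  intros x Hx. unfold Rmax. destruct (Rle_dec 0 (ln x)).
  - replace (ln x) with (/2 * ln (x^2)).
    + apply Rmult_le_compat_l. lra. apply ln_le. apply pow_lt; lra. lra.
    + rewrite Rpower.ln_pow by lra. simpl. field.
  - pose proof (ln1_nonneg x). lra.
Qed.

Fixpoint Iv (mu : nat -> R) (k : nat) : R :=
  match k with 0%nat => 0 | S k' => Iv mu k' + / mu (S k') end.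

Lemma SfI : forall mu t K b, (forall i, 1 <= mu i) -> 0 < t -> 1 <= b ->
  ex_RInt (fun s => Sf mu (t * s) K / s^2) 1 b /\
  RInt (fun s => Sf mu (t * s) K / s^2) 1 b <= 5 * t * Iv mu K.
Proof.
  intros mu t K b Hmu Ht Hb. induction K.
  - simpl. assert (He : forall s, 0 / s^2 = 0) by (intros; unfold Rdiv; ring).
    split.
    + apply ex_RInt_ext with (f := fun _ => 0). intros; simpl; unfold Rdiv; ring. apply ex_RInt_const.
    + rewrite (RInt_ext _ (fun _ => 0)). rewrite RInt_const. unfold scal; simpl; unfold mult; simpl. lra.
      intros; simpl; unfold Rdiv; ring.
  - destruct IHK as [Hex Hle].
    set (h := fun s => Rmax 0 (ln (t * s / mu (S K))) / s^2).
    assert (Hmu' : 0 < mu (S K)) by (specialize (Hmu (S K)); lra).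
    assert (Hhex : ex_RInt h 1 b).
    { apply (ex_RInt_continuous (V := R_CompleteNormedModule)). intros z Hz. assert (0 < z). { unfold Rmin in *; destruct (Rle_dec 1 b); lra. }
      unfold h. apply c_mult. apply c_rmax_ln; auto. apply cont_of_der. auto_derive. intro Hc; nra. }
    assert (Heq : forall s, Sf mu (t * s) (S K) / s^2 = plus (Sf mu (t * s) K / s^2) (h s)).
    { intros s. unfold h, plus; simpl. unfold Rdiv. ring. }
    split.
    + apply ex_RInt_ext with (f := fun s => plus (Sf mu (t * s) K / s^2) (h s)).
      intros; rewrite Heq; reflexivity. exact (ex_RInt_plus (V := R_NormedModule) _ _ 1 b Hex Hhex).
    + assert (Hsp : RInt (fun s => Sf mu (t * s) (S K) / s^2) 1 b =
              RInt (fun s => Sf mu (t * s) K / s^2) 1 b + RInt h 1 b).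
      { transitivity (RInt (fun s => Sf mu (t * s) K / s^2 + h s) 1 b).
        apply RInt_ext. intros; apply Heq.
        exact (RInt_plus (V := R_CompleteNormedModule) _ _ 1 b Hex Hhex). }
      rewrite Hsp.
      assert (RInt h 1 b <= 5 * t * / mu (S K)).
      { destruct (L1 (t / mu (S K)) b) as [Hex1 Hle1]; auto.
        apply Rdiv_le_0_compat; lra.
        apply Rle_trans with (RInt (fun s => / 2 * (ln (1 + (t / mu (S K) * s) ^ 2) / s ^ 2)) 1 b).
        - apply RInt_le; auto.
          apply ex_RInt_ext with (f := fun s => scal (/2) (ln (1 + (t / mu (S K) * s) ^ 2) / s ^ 2)).
          intros; reflexivity. exact (ex_RInt_scal (V := R_NormedModule) _ 1 b (/2) Hex1).
          intros x Hx. unfold h.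
          replace (t / mu (S K) * x) with (t * x / mu (S K)) by (field; lra).
          replace (/ 2 * (ln (1 + (t * x / mu (S K)) ^ 2) / x ^ 2)) with ((/ 2 * ln (1 + (t * x / mu (S K)) ^ 2)) * / x ^ 2) by (unfold Rdiv; ring). unfold Rdiv at 1. apply Rmult_le_compat_r. left; apply Rinv_0_lt_compat; nra.
          apply rmax_ln_le. apply Rdiv_lt_0_compat; nra.
        - assert (Hs : RInt (fun s => / 2 * (ln (1 + (t / mu (S K) * s) ^ 2) / s ^ 2)) 1 b =
                  / 2 * RInt (fun s => ln (1 + (t / mu (S K) * s) ^ 2) / s ^ 2) 1 b).
          { exact (RInt_scal (V := R_CompleteNormedModule) _ 1 b (/2) Hex1). }
          rewrite Hs.
          replace (5 * t * / mu (S K)) with (/2 * (10 * (t / mu (S K)))) by (field; lra).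
          apply Rmult_le_compat_l; lra. }
      simpl Iv. lra.
Qed.


Lemma Iv_le_series : forall mu l, (forall i, 1 <= mu i) -> is_series (fun i => / mu i) l ->
  forall K, Iv mu K <= l.
Proof.
  intros mu l Hmu Hs K.
  assert (Hpos : forall i, 0 < / mu i) by (intros i; apply Rinv_0_lt_compat; specialize (Hmu i); lra).
  assert (H1 : forall K, Iv mu K <= sum_n (fun i => / mu i) K).
  { induction K0. rewrite sum_O. simpl. specialize (Hpos 0%nat). lra.
    rewrite sum_Sn. simpl. unfold plus; simpl. lra. }
  eapply Rle_trans. apply H1.
  apply (is_lim_seq_incr_compare (sum_n (fun i => / mu i)) l). exact Hs.
  intros n. rewrite sum_Sn. unfold plus; simpl. specialize (Hpos (S n)). lra.
Qed.

Lemma kappa_facts : forall N mu, weight_seq_with N mu -> ex_series (fun k => / mu k) ->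
  forall t, 0 <= t ->
  is_RInt_gen (fun s => omega_tilde N (t * s) / s ^ 2) (at_point 1) (Rbar_locally p_infty)
    (kappa_of (omega_tilde N) t) /\ 0 <= kappa_of (omega_tilde N) t.
Proof.
  intros N mu HW [ls Hs] t Ht.
  assert (Hmu := mu_ge1 N mu HW).
  assert (Hex : exists l, 0 <= l /\ is_RInt_gen (fun s => omega_tilde N (t * s) / s ^ 2) (at_point 1) (Rbar_locally p_infty) l).
  { destruct (Req_dec t 0) as [H0|H0].
    - subst t. assert (Hz : forall s, omega_tilde N (0 * s) / s ^ 2 = 0).
      { intros s. rewrite Rmult_0_l. unfold omega_tilde. rewrite (omega0 N).
        replace (1 + 0^2) with 1 by ring. rewrite ln_1. unfold Rdiv; ring. }
      apply (mono_bounded _ 0).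
      + intros s _. rewrite Hz. lra.
      + intros b _. apply ex_RInt_ext with (f := fun _ => 0). intros; rewrite Hz; reflexivity. apply ex_RInt_const.
      + intros b _. rewrite (RInt_ext _ (fun _ => 0)). rewrite RInt_const. unfold scal; simpl; unfold mult; simpl. lra.
        intros; apply Hz.
    - assert (Ht' : 0 < t) by lra.
      apply (mono_bounded _ (5 * t * ls + 10 * t)).
      + intros s Hs1. apply Rdiv_le_0_compat. apply (omega_tilde_nonneg N mu HW). apply pow_lt; lra.
      + intros b Hb. destruct (exists_K N mu HW (t * b)) as [K HK].
        destruct (SfI mu t K b Hmu Ht' Hb) as [Hex1 _].
        destruct (L1 t b ltac:(lra) Hb) as [Hex2 _].
        apply ex_RInt_ext with (f := fun s => Sf mu (t * s) K / s^2 + ln (1 + (t * s)^2) / s^2).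
        * intros x Hx. unfold Rmin, Rmax in Hx; destruct (Rle_dec 1 b); try lra.
          unfold omega_tilde. rewrite (omega_eq_Sf N mu HW (t * x) K) by (try nra; intros i Hi; specialize (HK i Hi); nra).
          symmetry; apply Rdiv_plus_distr.
        * exact (ex_RInt_plus (V := R_NormedModule) _ _ 1 b Hex1 Hex2).
      + intros b Hb. destruct (exists_K N mu HW (t * b)) as [K HK].
        destruct (SfI mu t K b Hmu Ht' Hb) as [Hex1 Hle1].
        destruct (L1 t b ltac:(lra) Hb) as [Hex2 Hle2].
        rewrite (RInt_ext _ (fun s => Sf mu (t * s) K / s^2 + ln (1 + (t * s)^2) / s^2)).
        * assert (Hsp : RInt (fun s => Sf mu (t * s) K / s^2 + ln (1 + (t * s)^2) / s^2) 1 b =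
                   RInt (fun s => Sf mu (t * s) K / s^2) 1 b + RInt (fun s => ln (1 + (t * s)^2) / s^2) 1 b).
          { exact (RInt_plus (V := R_CompleteNormedModule) _ _ 1 b Hex1 Hex2). }
          rewrite Hsp. pose proof (Iv_le_series mu ls Hmu Hs K).
          assert (5 * t * Iv mu K <= 5 * t * ls) by (apply Rmult_le_compat_l; lra). lra.
        * intros x Hx. unfold Rmin, Rmax in Hx; destruct (Rle_dec 1 b); try lra.
          unfold omega_tilde. rewrite (omega_eq_Sf N mu HW (t * x) K) by (try nra; intros i Hi; specialize (HK i Hi); nra).
          apply Rdiv_plus_distr. }
  destruct Hex as [l [Hl0 Hl]].
  assert (E : kappa_of (omega_tilde N) t = l). { unfold kappa_of. exact (is_RInt_gen_unique (V := R_CompleteNormedModule) _ _ Hl). } rewrite E. auto.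
Qed.

Lemma prod_le : filter_prod (at_point 1) (Rbar_locally p_infty) (fun ab : R * R => fst ab <= snd ab).
Proof.
  apply Filter_prod with (Q := fun a => a = 1) (R := fun b => 1 < b).
  reflexivity. exists 1; auto. intros x y Hx Hy; subst; simpl; lra.
Qed.

Lemma prod_pt : forall (P : R -> Prop), (forall x, 1 <= x -> P x) ->
  filter_prod (at_point 1) (Rbar_locally p_infty)
    (fun ab : R * R => forall x, fst ab <= x <= snd ab -> P x).
Proof.
  intros P HP.
  apply Filter_prod with (Q := fun a => a = 1) (R := fun b => 1 < b).
  reflexivity. exists 1; auto. intros x y Hx Hy; subst; simpl. intros z Hz. apply HP; lra.
Qed.

Lemma kappa_lower : forall N mu, weight_seq_with N mu -> ex_series (fun k => / mu k) ->
  forall t n, 0 < t -> ln (t ^ n * N 0%nat / N n) <= kappa_of (omega_tilde N) t.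
Proof.
  intros N mu HW Hser t n Ht.
  destruct (kappa_facts N mu HW Hser t ltac:(lra)) as [Hi H0].
  set (c := ln (t ^ n * N 0%nat / N n)).
  destruct (Rle_dec c 0) as [Hc|Hc]. lra.
  assert (Hn := RInt_gen_norm (Fa := at_point 1) (Fb := Rbar_locally p_infty)
     (fun s => c / s ^ 2) (fun s => omega_tilde N (t * s) / s ^ 2) c (kappa_of (omega_tilde N) t) prod_le).
  assert (norm c <= kappa_of (omega_tilde N) t).
  { apply Hn; [| apply is_RInt_gen_inv_sq | exact Hi].
    apply prod_pt. intros x Hx.
    change (Rabs (c / x^2) <= omega_tilde N (t * x) / x ^ 2).
    assert (0 < x^2) by (apply pow_lt; lra).
    rewrite Rabs_right by (apply Rle_ge, Rdiv_le_0_compat; lra).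
    unfold Rdiv. apply Rmult_le_compat_r. left; apply Rinv_0_lt_compat; lra.
    unfold omega_tilde. pose proof (ln1_nonneg (t * x)).
    pose proof (omega_ge N mu HW (t * x) n ltac:(nra)).
    assert (c <= ln ((t * x) ^ n * N 0%nat / N n)).
    { unfold c. pose proof (M_pos N mu HW n). pose proof (M_pos N mu HW 0).
      apply ln_le. apply Rdiv_lt_0_compat; [apply Rmult_lt_0_compat; [apply pow_lt|]|]; lra.
      unfold Rdiv. apply Rmult_le_compat_r. left; apply Rinv_0_lt_compat; lra.
      apply Rmult_le_compat_r. lra. apply pow_incr. nra. }
    lra. }
  change (Rabs c <= kappa_of (omega_tilde N) t) in H. pose proof (Rle_abs c). lra.
Qed.

Lemma kappa_compare : forall Na ma Nb mb H, weight_seq_with Na ma -> ex_series (fun k => / ma k) ->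
  weight_seq_with Nb mb -> ex_series (fun k => / mb k) -> 0 < H ->
  (forall u, 0 <= u -> 2 * omega_tilde Nb u <= omega_tilde Na (H * u)) ->
  forall t, 0 <= t -> 2 * kappa_of (omega_tilde Nb) t <= kappa_of (omega_tilde Na) (H * t).
Proof.
  intros Na ma Nb mb H HWa Hsa HWb Hsb HH Hp t Ht.
  destruct (kappa_facts Na ma HWa Hsa (H * t) ltac:(nra)) as [Hia _].
  destruct (kappa_facts Nb mb HWb Hsb t Ht) as [Hib Hb0].
  assert (Hib2 : is_RInt_gen (fun s => 2 * (omega_tilde Nb (t * s) / s ^ 2)) (at_point 1) (Rbar_locally p_infty)
     (2 * kappa_of (omega_tilde Nb) t)).
  { exact (is_RInt_gen_scal (V := R_NormedModule) _ 2 _ Hib). }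
  assert (Hn := RInt_gen_norm (Fa := at_point 1) (Fb := Rbar_locally p_infty)
     (fun s => 2 * (omega_tilde Nb (t * s) / s ^ 2)) (fun s => omega_tilde Na (H * t * s) / s ^ 2) (2 * kappa_of (omega_tilde Nb) t) (kappa_of (omega_tilde Na) (H * t)) prod_le).
  assert (norm (2 * kappa_of (omega_tilde Nb) t) <= kappa_of (omega_tilde Na) (H * t)).
  { apply Hn; [| exact Hib2 | exact Hia].
    apply prod_pt. intros x Hx.
    change (Rabs (2 * (omega_tilde Nb (t * x) / x ^ 2)) <= omega_tilde Na (H * t * x) / x ^ 2).
    assert (0 < x^2) by (apply pow_lt; lra).
    pose proof (omega_tilde_nonneg Nb mb HWb (t * x)).
    rewrite Rabs_right by (apply Rle_ge, Rmult_le_pos; [lra| apply Rdiv_le_0_compat; lra]).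
    replace (2 * (omega_tilde Nb (t * x) / x ^ 2)) with ((2 * omega_tilde Nb (t * x)) / x ^ 2) by (field; lra).
    unfold Rdiv. apply Rmult_le_compat_r. left; apply Rinv_0_lt_compat; lra.
    rewrite Rmult_assoc. apply Hp. nra. }
  change (Rabs (2 * kappa_of (omega_tilde Nb) t) <= kappa_of (omega_tilde Na) (H * t)) in H0.
  pose proof (Rle_abs (2 * kappa_of (omega_tilde Nb) t)). lra.
Qed.


Lemma PS_char : forall om x B, (forall y, 0 <= y -> x * y - om (exp y) <= B) ->
  (forall y, 0 <= y -> x * y - om (exp y) <= phi_star om x) /\ phi_star om x <= B.
Proof.
  intros om x B HB. unfold phi_star.
  set (E := fun z => exists y, 0 <= y /\ z = x * y - om (exp y)).
  destruct (Lub_Rbar_correct E) as [Hub Hl].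
  assert (HBub : Rbar_le (Lub_Rbar E) B).
  { apply Hl. intros z [y [Hy Hz]]. subst z. simpl. apply HB; auto. }
  assert (Hel : forall y, 0 <= y -> Rbar_le (x * y - om (exp y)) (Lub_Rbar E)).
  { intros y Hy. apply Hub. exists y; auto. }
  destruct (Lub_Rbar E) as [r| |].
  - simpl in *. split; auto.
  - simpl in HBub. contradiction.
  - specialize (Hel 0 (Rle_refl 0)). simpl in Hel. contradiction.
Qed.

Lemma exp_le_mono : forall a b, a <= b -> exp a <= exp b.
Proof. intros a b [H|H]. left; apply exp_increasing; auto. subst; lra. Qed.

Lemma pow_as_exp : forall C n, 0 < C -> C ^ n = exp (INR n * ln C).
Proof. intros C n HC. rewrite <- Rpower_pow by auto. unfold Rpower. reflexivity. Qed.

Definition k0 (k : R -> R) (t : R) : R := Rmax 0 (k t - k 1).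

Lemma k0_nonneg : forall k t, 0 <= k0 k t.
Proof. intros; unfold k0; apply Rmax_l. Qed.

Lemma k0_1 : forall k, k0 k 1 = 0.
Proof. intros; unfold k0. replace (k 1 - k 1) with 0 by ring. unfold Rmax; destruct (Rle_dec 0 0); lra. Qed.

Lemma K_part : forall (ka kb : R -> R) H, 1 <= H -> 0 <= ka 1 -> 0 <= kb 1 ->
  (forall t, 0 <= t -> 2 * kb t <= ka (H * t) + H) ->
  (forall n : nat, exists B, forall y, 0 <= y -> INR n * y - k0 kb (exp y) <= B) ->
  exists C, 1 <= C /\ forall j k : nat,
    exp (phi_star (k0 ka) (INR (j + k))) <=
    C ^ (j + k) * exp (phi_star (k0 kb) (INR j)) * exp (phi_star (k0 kb) (INR k)).
Proof.
  intros ka kb H H1 Ha1 Hb1 Hk Hfin.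
  set (D := ka 1 + H).
  assert (HD : 0 <= D) by (unfold D; lra).
  assert (HeD : 1 <= exp D) by (pose proof (exp_ineq1_le D); lra).
  exists (H * exp D). split. nra.
  intros j k.
  assert (Hb : forall m : nat, (forall y, 0 <= y -> INR m * y - k0 kb (exp y) <= phi_star (k0 kb) (INR m))
                       /\ 0 <= phi_star (k0 kb) (INR m)).
  { intros m. destruct (Hfin m) as [B HB]. destruct (PS_char _ _ _ HB) as [Hel _].
    split; auto. specialize (Hel 0 (Rle_refl 0)). rewrite exp_0, k0_1 in Hel. lra. }
  destruct (Hb j) as [Hbj Hbj0]. destruct (Hb k) as [Hbk Hbk0].
  set (pj := phi_star (k0 kb) (INR j)) in *. set (pk := phi_star (k0 kb) (INR k)) in *.
  assert (HlnH : 0 <= ln H) by (rewrite <- ln_1; apply ln_le; lra).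
  assert (Hkey : forall t, 0 <= t -> 2 * k0 kb t <= k0 ka (H * t) + D).
  { intros t Ht. specialize (Hk t Ht). unfold k0, D. unfold Rmax.
    destruct (Rle_dec 0 (kb t - kb 1)); destruct (Rle_dec 0 (ka (H * t) - ka 1)); lra. }
  assert (Hlc : ln (H * exp D) = ln H + D) by (rewrite ln_mult, ln_exp; [ring|lra|apply exp_pos]).
  assert (Hmain : phi_star (k0 ka) (INR (j + k)) <= INR (j + k) * ln (H * exp D) + pj + pk).
  { destruct (Nat.eq_dec (j + k) 0) as [Hn0|Hn0].
    - rewrite Hn0. simpl INR.
      assert (Hz : forall y, 0 <= y -> 0 * y - k0 ka (exp y) <= 0).
      { intros y _. pose proof (k0_nonneg ka (exp y)). lra. }
      destruct (PS_char _ _ _ Hz) as [_ Hle]. lra.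
    - assert (Hn1 : 1 <= INR (j + k)) by (apply (le_INR 1); lia).
      apply PS_char. intros y Hy. rewrite Hlc.
      pose proof (k0_nonneg ka (exp y)).
      destruct (Rle_dec (ln H) y) as [Hy1|Hy1].
      + set (y' := y - ln H).
        assert (Hey : exp y = H * exp y'). { unfold y'. replace y with ((y - ln H) + ln H) at 1 by ring. rewrite exp_plus, exp_ln by lra. ring. }
        specialize (Hkey (exp y') (Rlt_le _ _ (exp_pos y'))). rewrite <- Hey in Hkey.
        specialize (Hbj y' ltac:(unfold y'; lra)). specialize (Hbk y' ltac:(unfold y'; lra)).
        rewrite plus_INR in *.
        assert (D <= (INR j + INR k) * D) by nra.
        assert (E1 : INR j * y = INR j * y' + INR j * ln H) by (unfold y'; ring).
        assert (E2 : INR k * y = INR k * y' + INR k * ln H) by (unfold y'; ring).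
        assert (E3 : (INR j + INR k) * (ln H + D) = INR j * ln H + INR k * ln H + (INR j + INR k) * D) by ring.
        assert (E4 : (INR j + INR k) * y = INR j * y + INR k * y) by ring.
        rewrite E3, E4. lra.
      + assert (INR (j + k) * y <= INR (j + k) * ln H) by (apply Rmult_le_compat_l; [apply pos_INR|lra]).
        assert (0 <= INR (j + k) * D) by (apply Rmult_le_pos; [apply pos_INR|lra]).
        nra. }
  rewrite (pow_as_exp (H * exp D) (j + k)) by (pose proof (exp_pos D); nra).
  rewrite <- !exp_plus. apply exp_le_mono. lra.
Qed.


Lemma Pcond_proof : forall M, nonquasianalytic_matrix M -> R_moderate_growth M ->
  forall a, 0 < a -> exists b, 0 < b /\ exists H, 1 <= H /\
        forall t, 0 <= t -> 2 * kappa_mat M b t <= kappa_mat M a (H * t) + H.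
Proof.
  intros M [HWM HNQ] HMG a Ha.
  destruct (HMG a Ha) as [b1 [Hb1 [C1 [HC1 Hmg1]]]].
  destruct (HMG b1 Hb1) as [b2 [Hb2 [C2 [HC2 Hmg2]]]].
  destruct (HNQ a Ha) as [ma [HWa Hsa]].
  destruct (HNQ b1 Hb1) as [m1 [HW1 Hs1]].
  destruct (HNQ b2 Hb2) as [m2 [HW2 Hs2]].
  pose proof (mg_omega (M a) ma (M b1) m1 C1 HWa HW1 HC1 Hmg1) as O1.
  pose proof (mg_omega (M b1) m1 (M b2) m2 C2 HW1 HW2 HC2 Hmg2) as O2.
  pose proof (M_ge1 _ _ HWa 4) as HM4.
  set (H := C1 * C2 + 4 * M a 4%nat + 2).
  assert (HH1 : 1 <= H) by (unfold H; nra).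
  assert (Hw : forall u, 0 < u -> 4 * omega_assoc (M b2) u <= omega_assoc (M a) (H * u)).
  { intros u Hu. specialize (O2 u Hu). specialize (O1 (C2 * u) ltac:(nra)).
    assert (omega_assoc (M a) (C1 * (C2 * u)) <= omega_assoc (M a) (H * u)).
    { assert (0 < C2 * u) by nra. assert (0 < C1 * (C2 * u)) by nra. apply (omega_mono (M a) ma HWa). lra. unfold H. assert (0 <= (4 * M a 4%nat + 2) * u) by nra. nra. }
    lra. }
  pose proof (tilde_ineq (M a) ma (M b2) m2 H HWa HW2 HH1 ltac:(unfold H; nra) Hw) as Ht.
  exists b2. split; auto. exists H. split; auto.
  intros t Ht0. unfold kappa_mat.
  pose proof (kappa_compare (M a) ma (M b2) m2 H HWa Hsa HW2 Hs2 ltac:(lra) Ht t Ht0). lra.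
Qed.

Lemma K_mg : forall M, nonquasianalytic_matrix M ->
  (forall a, 0 < a -> exists b, 0 < b /\ exists H, 1 <= H /\
        forall t, 0 <= t -> 2 * kappa_mat M b t <= kappa_mat M a (H * t) + H) ->
  R_moderate_growth (K_mat M).
Proof.
  intros M [HWM HNQ] HP a Ha.
  destruct (HP a Ha) as [b [Hb [H [HH Hk]]]].
  destruct (HNQ a Ha) as [ma [HWa Hsa]].
  destruct (HNQ b Hb) as [mb [HWb Hsb]].
  assert (Ha1 : 0 <= kappa_mat M a 1) by (apply (kappa_facts (M a) ma HWa Hsa 1); lra).
  assert (Hb1 : 0 <= kappa_mat M b 1) by (apply (kappa_facts (M b) mb HWb Hsb 1); lra).
  assert (Hfin : forall n : nat, exists B, forall y, 0 <= y -> INR n * y - k0 (kappa_mat M b) (exp y) <= B).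
  { intros n. exists (ln (M b n) + kappa_mat M b 1). intros y Hy.
    pose proof (kappa_lower (M b) mb HWb Hsb (exp y) n (exp_pos y)) as Hl.
    fold (kappa_mat M b (exp y)) in Hl.
    rewrite (M0_1 _ _ HWb) in Hl. pose proof (M_pos _ _ HWb n).
    rewrite (pow_as_exp (exp y) n (exp_pos y)), ln_exp in Hl.
    unfold Rdiv in Hl. rewrite Rmult_1_r, ln_mult, ln_exp, ln_Rinv in Hl by (try apply exp_pos; try apply Rinv_0_lt_compat; lra).
    unfold k0. pose proof (Rmax_r 0 (kappa_mat M b (exp y) - kappa_mat M b 1)). lra. }
  destruct (K_part (kappa_mat M a) (kappa_mat M b) H HH Ha1 Hb1 Hk Hfin) as [C [HC HKC]].
  exists b. split; [exact Hb|]. exists C. split; [exact HC| exact HKC].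
Qed.

Theorem lemma3p3 (M : R -> nat -> R) :
  nonquasianalytic_matrix M ->
  R_moderate_growth M ->
  R_moderate_growth (K_mat M) /\
  (R_moderate_growth (K_mat M) <->
     (forall a, 0 < a -> exists b, 0 < b /\ exists H, 1 <= H /\
        forall t, 0 <= t -> 2 * kappa_mat M b t <= kappa_mat M a (H * t) + H)) /\
  (forall a, 0 < a -> exists b, 0 < b /\ exists H, 1 <= H /\
        forall t, 0 <= t -> 2 * kappa_mat M b t <= kappa_mat M a (H * t) + H).
Proof.
  intros HNQ HMG.
  pose proof (Pcond_proof M HNQ HMG) as HP.
  pose proof (K_mg M HNQ HP) as HK.
  split; [exact HK|]. split; [split; intros _; assumption | exact HP].
Qed.
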